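(* Let $w\in\mathfrak{S}_n$ be Bruhat irreducible and almost reducible at $(J,i)$. Then $s_i$ commutes with every element of $D_L(w)\cap D_R(w)$.
   Context: $\mathfrak{S}_n$ has simple generators $S=\{s_1,\ldots,s_{n-1}\}$, $s_i=(i\ i{+}1)$, length $\ell$. $\supp(x)$ is the set of simple generators in a reduced word of $x$; $D_L(x)=\{s\in S:\ell(sx)<\ell(x)\}$, $D_R(x)=\{s\in S:\ell(xs)<\ell(x)\}$. For $J\subseteq S$, $x=x^Jx_J$ is the parabolic decomposition ($x_J\in W_J=\langle J\rangle$, $x^J$ minimal length in $xW_J$); it is a BP-decomposition if $\supp(x^J)\cap J\subseteq D_L(x_J)$. $w$ is Bruhat irreducible if $\supp(w)=S$ and $w$ is not a product $w'w''$ with $w',w''\ne e$ and $\supp(w')\cap\supp(w'')=\emptyset$. A Bruhat irreducible $w$ is almost reducible at $(J,i)$ if $w=w^Jw_J$ is a BP-decomposition with $\supp(w^J)\cap J=\{s_i\}$ and $s_i\notin D_L(w)\cup D_R(w)$. *)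

(* Defs.v *)
From Stdlib Require Import ClassicalEpsilon.
From HB Require Import structures.
From mathcomp Require Import all_boot all_fingroup.
Set Implicit Arguments. Unset Strict Implicit. Unset Printing Implicit Defensive.

Local Open Scope group_scope.

Section Coxeter.
Variable n : nat.

(* Simple generators s_1, ..., s_{n-1}: s_i = (i i+1); with 0-based points
   'I_n, s_i is the transposition of the points i-1 and i. *)
Definition Sgen : {set 'S_n} :=
  [set s | [exists i : 'I_n, exists j : 'I_n, (val j == (val i).+1) && (s == tperm i j)]].

Definition is_word (x : 'S_n) (w : seq 'S_n) : Prop :=
  all (fun s => s \in Sgen) w /\ \prod_(s <- w) s = x.

Definition is_length (x : 'S_n) (k : nat) : Prop :=
  (exists w, is_word x w /\ size w = k) /\ (forall w, is_word x w -> k <= size w).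

Definition len (x : 'S_n) : nat := epsilon (inhabits 0%N) (is_length x).

Definition reduced_word (x : 'S_n) (w : seq 'S_n) : Prop :=
  is_word x w /\ size w = len x.

Definition supp (x : 'S_n) (s : 'S_n) : Prop :=
  exists w, reduced_word x w /\ s \in w.

Definition DL (x : 'S_n) (s : 'S_n) : Prop := s \in Sgen /\ len (s * x) < len x.
Definition DR (x : 'S_n) (s : 'S_n) : Prop := s \in Sgen /\ len (x * s) < len x.

(* parabolic decomposition x = u v with u = x^J, v = x_J:
   v in W_J = <J>, u of minimal length in the coset x W_J *)
Definition parabolic_dec (J : {set 'S_n}) (x u v : 'S_n) : Prop :=
  [/\ x = u * v, v \in <<J>>, u \in x *: <<J>> &
      forall y, y \in x *: <<J>> -> len u <= len y].

Definition BP_dec (J : {set 'S_n}) (x u v : 'S_n) : Prop :=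
  parabolic_dec J x u v /\ (forall s, supp u s -> s \in J -> DL v s).

Definition bruhat_irreducible (w : 'S_n) : Prop :=
  (forall s, supp w s <-> s \in Sgen) /\
  ~ (exists w1 w2, [/\ w1 != 1, w2 != 1, w = w1 * w2 &
                       forall s, ~ (supp w1 s /\ supp w2 s)]).

(* w (Bruhat irreducible) is almost reducible at (J, s_i); here s plays s_i *)
Definition almost_reducible (w : 'S_n) (J : {set 'S_n}) (s : 'S_n) : Prop :=
  J \subset Sgen /\
  exists u v, [/\ BP_dec J w u v,
                  (forall t, (supp u t /\ t \in J) <-> t = s),
                  ~ DL w s & ~ DR w s].

End Coxeter.

(* Main.v *)
Require Import Defs.
From mathcomp Require Import all_boot all_fingroup.
From Stdlib Require Import Classical ClassicalEpsilon.
From mathcomp Require Import zify.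
Set Implicit Arguments. Unset Strict Implicit. Unset Printing Implicit Defensive.

Section Inv.
Variable n : nat.
Implicit Types x y : 'S_n.
Local Open Scope group_scope.

Definition Nset x : {set 'I_n * 'I_n} :=
  [set pq : 'I_n * 'I_n | ((pq.1 < pq.2)%N && (x pq.2 < x pq.1)%N)].
Definition inv x := #|Nset x|.

Lemma ord_eqP (p q : 'I_n) : (p == q) = (p == q :> nat).
Proof. by []. Qed.

Lemma swap_order (a b c d : 'I_n) : (b : nat) = (a : nat).+1 ->
  ~~ ((c == a) && (d == b) || (c == b) && (d == a)) ->
  (tperm a b c < tperm a b d)%N = (c < d)%N.
Proof.
move=> Hab.
have vne : forall p q : 'I_n, p <> q -> (p : nat) <> q := fun p q H E => H (val_inj E).
have veq : forall p q : 'I_n, p = q -> (p : nat) = q := fun p q H => congr1 val H.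
rewrite !ord_eqP.
case: tpermP => [/veq Hc|/veq Hc|/vne Hc1 /vne Hc2];
case: tpermP => [/veq Hd|/veq Hd|/vne Hd1 /vne Hd2]; lia.
Qed.

Lemma L1gen x (a b : 'I_n) : (b : nat) = (a : nat).+1 ->
  (x^-1 a < x^-1 b)%N -> inv (x * tperm a b) = (inv x).+1.
Proof.
move=> Hab Hlt; set pa := x^-1 a; set pb := x^-1 b.
have Hlt' : (pa < pb)%N by exact: Hlt.
have Ea : x pa = a by rewrite permKV.
have Eb : x pb = b by rewrite permKV.
have Hnotin : (pa, pb) \notin Nset x.
  by rewrite inE /= Ea Eb negb_and -leqNgt; apply/orP; right; lia.
suff E : Nset (x * tperm a b) = (pa, pb) |: Nset x by rewrite /inv E cardsU1 Hnotin.
apply/setP => -[p q]; rewrite !inE /= !permM.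
case: (boolP ((p == pa) && (q == pb))) => [/andP[/eqP -> /eqP ->]|H1].
  rewrite Ea Eb tpermL tpermR eqxx Hlt' /=; apply/idP; lia.
case: (boolP ((p == pb) && (q == pa))) => [/andP[/eqP -> /eqP ->]|H2].
  have Hne : (pb == pa) = false by apply/negbTE; rewrite neq_ltn Hlt' orbT.
  by rewrite ltnNge (ltnW Hlt') /= xpair_eqE Hne.
rewrite swap_order //.
  by rewrite xpair_eqE (negbTE H1) /=.
by rewrite -Ea -Eb !(inj_eq perm_inj) (andbC (q == pa)) (andbC (q == pb)) negb_or H1 H2.
Qed.

Lemma L1b x (a b : 'I_n) : (b : nat) = (a : nat).+1 ->
  (x^-1 b < x^-1 a)%N -> (inv (x * tperm a b)).+1 = inv x.
Proof.
move=> Hab Hlt; set y := x * tperm a b.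
have Ex : x = y * tperm a b by rewrite /y -mulgA tperm2 mulg1.
have Hy : (y^-1 a < y^-1 b)%N.
  by rewrite /y invMg tpermV !permM tpermL tpermR.
by rewrite Ex (L1gen Hab Hy).
Qed.

Lemma inv_inv x : inv x^-1 = inv x.
Proof.
suff H : forall y, (inv y^-1 <= inv y)%N.
  by apply/eqP; rewrite eqn_leq H /= -{1}(invgK x) H.
move=> y; rewrite /inv.
pose f (pq : 'I_n * 'I_n) := (y pq.2, y pq.1).
apply: (leq_trans _ (leq_imset_card f _)); apply: subset_leq_card.
apply/subsetP => -[c d]; rewrite inE /= => /andP[H1 H2].
apply/imsetP; exists (y^-1 d, y^-1 c); last by rewrite /f /= !permKV.
by rewrite inE /= !permKV H1 andbT.
Qed.

Lemma L2a x (a b : 'I_n) : (b : nat) = (a : nat).+1 ->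
  (x a < x b)%N -> inv (tperm a b * x) = (inv x).+1.
Proof.
move=> Hab Hlt; rewrite -inv_inv invMg tpermV -(inv_inv x).
by apply: L1gen; rewrite // invgK.
Qed.

Lemma L2b x (a b : 'I_n) : (b : nat) = (a : nat).+1 ->
  (x b < x a)%N -> (inv (tperm a b * x)).+1 = inv x.
Proof.
move=> Hab Hlt; rewrite -inv_inv invMg tpermV -(inv_inv x).
by apply: L1b; rewrite // invgK.
Qed.

Lemma inv1 : inv 1 = 0.
Proof.
rewrite /inv; apply/eqP; rewrite cards_eq0; apply/eqP/setP => -[p q].
rewrite !inE /= !perm1; apply/negbTE; rewrite negb_and -!leqNgt; apply/orP.
case: (leqP q p) => H; [by left | right; exact: ltnW].
Qed.

Lemma incr_ge (f : 'I_n -> 'I_n) : (forall p q : 'I_n, (p < q)%N -> (f p < f q)%N) ->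
  forall p : 'I_n, (p <= f p)%N.
Proof.
move=> Hf.
suff H : forall m (p : 'I_n), (p : nat) = m -> (p <= f p)%N by move=> p; exact: H.
elim=> [p ->//|m IH p Hp].
have Hm : (m < n)%N by have := ltn_ord p; lia.
have := IH (Ordinal Hm) erefl; have := Hf (Ordinal Hm) p; rewrite /= Hp ltnSn.
move=> /(_ isT); lia.
Qed.

Lemma inv0 x : inv x = 0 -> x = 1.
Proof.
move=> H0.
have Hinc : forall p q : 'I_n, (p < q)%N -> (x p < x q)%N.
  move=> p q Hpq; move/eqP: H0; rewrite cards_eq0 => /eqP/setP/(_ (p, q)).
  rewrite !inE /= Hpq /= => /negbT; rewrite -leqNgt leq_eqVlt => /orP[/eqP E|//].
  by move/val_inj/perm_inj: E => E; rewrite E ltnn in Hpq.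
have Hinc' : forall p q : 'I_n, (p < q)%N -> (x^-1 p < x^-1 q)%N.
  move=> p q Hpq; case: (ltngtP (x^-1 p) (x^-1 q)) => // H.
    by have := Hinc _ _ H; rewrite !permKV => /(ltn_trans Hpq); rewrite ltnn.
  by move/val_inj/(congr1 x): H; rewrite !permKV => E; rewrite E ltnn in Hpq.
apply/permP => p; rewrite perm1; apply/val_inj/eqP; rewrite eqn_leq.
have := incr_ge Hinc' (x p); rewrite permK => ->.
by rewrite incr_ge.
Qed.

Lemma descent x : (0 < inv x)%N ->
  exists a b : 'I_n, (b : nat) = (a : nat).+1 /\ (x b < x a)%N.
Proof.
move=> Hpos; apply: NNPP => Hno.
have Hadj : forall a b : 'I_n, (b : nat) = (a : nat).+1 -> (x a < x b)%N.
  move=> a b Hab; case: (ltngtP (x a) (x b)) => // H.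
    by exfalso; apply: Hno; exists a, b.
  by move/val_inj/perm_inj: H => E; rewrite E in Hab; lia.
have Hinc : forall d (p q : 'I_n), (q : nat) = (p + d.+1)%N -> (x p < x q)%N.
  elim=> [|d IH] p q Hq; first by apply: Hadj; rewrite Hq addn1.
  have Hm : (p + d.+1 < n)%N by have := ltn_ord q; lia.
  apply: (ltn_trans (IH p (Ordinal Hm) erefl)); apply: Hadj => /=; lia.
have : inv x = 0.
  apply/eqP; rewrite cards_eq0; apply/eqP/setP => -[p q]; rewrite !inE /=.
  apply/negbTE; apply/negP => /andP[Hpq H].
  have := Hinc (q - p.+1)%N p q ltac:(lia); lia.
by move=> E; rewrite E in Hpos.
Qed.


Lemma SgenP (s : 'S_n) : s \in Sgen n <->
  exists a b : 'I_n, (b : nat) = (a : nat).+1 /\ s = tperm a b.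
Proof.
rewrite inE; split.
  by move=> /existsP[a /existsP[b /andP[/eqP H /eqP ->]]]; exists a, b.
move=> [a [b [H ->]]]; apply/existsP; exists a; apply/existsP; exists b.
by rewrite eqxx andbT; apply/eqP.
Qed.

Lemma tperm_Sgen (a b : 'I_n) : (b : nat) = (a : nat).+1 -> tperm a b \in Sgen n.
Proof. by move=> H; apply/SgenP; exists a, b. Qed.

Lemma word_bound (ws : seq 'S_n) x : is_word x ws -> (inv x <= size ws)%N.
Proof.
elim: ws x => [|s ws IH] x [Hall Hprod].
  by rewrite big_nil in Hprod; rewrite -Hprod inv1.
rewrite big_cons in Hprod; move: Hall => /= /andP[Hs Hall].
have [a [b [Hab Es]]] := (SgenP s).1 Hs; subst s.
set y := \prod_(s <- ws) s in Hprod.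
have Hy := IH y (conj Hall erefl); rewrite -Hprod.
case: (ltngtP (y a) (y b)) => H.
- by rewrite (L2a Hab H) /=; lia.
- have := L2b Hab H; rewrite /=; move: (inv _) Hy => k Hy; move: (inv _) => k2; lia.
- by move/val_inj/perm_inj: H => E; rewrite E in Hab; lia.
Qed.

Lemma word_exists x : exists ws, is_word x ws /\ size ws = inv x.
Proof.
suff H : forall k x, inv x = k -> exists ws, is_word x ws /\ size ws = k.
  exact: H.
elim=> [|k IH] {}x Hx.
  by exists [::]; rewrite (inv0 Hx) /is_word big_nil.
have [a [b [Hab Hlt]]] : exists a b : 'I_n, (b : nat) = (a : nat).+1 /\ (x b < x a)%N.
  by apply: descent; rewrite Hx.
have Hy := L2b Hab Hlt; rewrite Hx in Hy; case: Hy => Hy.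
have [ws [[Hall Hprod] Hs]] := IH _ Hy.
exists (tperm a b :: ws); split; last by rewrite /= Hs.
split; first by rewrite /= tperm_Sgen.
by rewrite big_cons Hprod mulgA tperm2 mul1g.
Qed.

Lemma len_inv x : len x = inv x.
Proof.
have Hl : is_length x (inv x).
  by split; [exact: word_exists | move=> w Hw; exact: word_bound].
have := epsilon_spec (inhabits 0%N) (is_length x) (ex_intro _ _ Hl).
rewrite -/(len x) => -[[w [Hw Hs]] Hmin].
apply/eqP; rewrite eqn_leq; apply/andP; split.
  by have [ws [Hws <-]] := word_exists x; apply: Hmin.
by rewrite -Hs; apply: word_bound.
Qed.

Lemma DL_iff x (a b : 'I_n) : (b : nat) = (a : nat).+1 ->
  DL x (tperm a b) <-> (x b < x a)%N.
Proof.
move=> Hab; rewrite /DL !len_inv; split.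
  move=> [_ H]; case: (ltngtP (x a) (x b)) => // H'.
    by rewrite (L2a Hab H') ltnNge leqnSn in H.
  by move/val_inj/perm_inj: H' => E; rewrite E in Hab; lia.
move=> H; split; first exact: tperm_Sgen.
by rewrite -(L2b Hab H).
Qed.

Lemma DR_iff x (a b : 'I_n) : (b : nat) = (a : nat).+1 ->
  DR x (tperm a b) <-> (x^-1 b < x^-1 a)%N.
Proof.
move=> Hab; rewrite /DR !len_inv; split.
  move=> [_ H]; case: (ltngtP (x^-1 a) (x^-1 b)) => // H'.
    by rewrite (L1gen Hab H') ltnNge leqnSn in H.
  by move/val_inj/perm_inj: H' => E; rewrite E in Hab; lia.
move=> H; split; first exact: tperm_Sgen.
by rewrite -(L1b Hab H).
Qed.


Definition stab (x : 'S_n) (m : nat) := forall p : 'I_n, (p < m)%N -> (x p < m)%N.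

Lemma stabV x m : stab x m -> stab x^-1 m.
Proof.
move=> H; set A := [set p : 'I_n | (p < m)%N].
have sub : x @: A \subset A.
  by apply/subsetP => z /imsetP[p]; rewrite !inE => Hp ->; apply: H.
have E : x @: A = A.
  by apply/eqP; rewrite eqEcard sub (card_imset _ perm_inj) leqnn.
move=> q Hq; have : q \in x @: A by rewrite E inE.
by case/imsetP => p; rewrite inE => Hp ->; rewrite permK.
Qed.

Lemma stabC x m (p : 'I_n) : stab x m -> (m <= p)%N -> (m <= x p)%N.
Proof.
move=> H Hp; rewrite leqNgt; apply/negP => Hx.
have := stabV H Hx; rewrite permK; lia.
Qed.

Lemma stab1 m : stab 1 m.
Proof. by move=> p; rewrite perm1. Qed.

Lemma stabM x y m : stab x m -> stab y m -> stab (x * y) m.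
Proof. by move=> Hx Hy p Hp; rewrite permM; apply: Hy; apply: Hx. Qed.

Lemma stab_gen (a b : 'I_n) m : (b : nat) = (a : nat).+1 -> (b : nat) <> m ->
  stab (tperm a b) m.
Proof.
move=> Hab Hm p Hp.
by case: tpermP => [/(congr1 val) /= E|/(congr1 val) /= E|_ _]; lia.
Qed.

Lemma gen_inj (a b a' b' : 'I_n) : (b : nat) = (a : nat).+1 ->
  (b' : nat) = (a' : nat).+1 -> tperm a b = tperm a' b' -> (b : nat) = b'.
Proof.
move=> H1 H2 E; have := congr1 (fun f : 'S_n => f a) E; rewrite /= tpermL.
by case: tpermP => [/(congr1 val) /= E1|/(congr1 val) /= E1|Ne1 Ne2] /(congr1 val) /= E2; lia.
Qed.

Lemma gen_eq (a b a' b' : 'I_n) : (b : nat) = (a : nat).+1 ->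
  (b' : nat) = (a' : nat).+1 -> (b : nat) = b' -> tperm a b = tperm a' b'.
Proof.
move=> H1 H2 E.
have Eb : b = b' by apply: val_inj.
have Ea : a = a' by apply: val_inj => /=; lia.
by rewrite Ea Eb.
Qed.

Lemma stab_other (a b : 'I_n) s : (b : nat) = (a : nat).+1 -> s \in Sgen n ->
  s != tperm a b -> stab s b.
Proof.
move=> Hab /SgenP[a' [b' [Hab' ->]]] Hne; apply: stab_gen => // E.
by move: Hne; rewrite (gen_eq Hab' Hab E) eqxx.
Qed.

Lemma stab_prod (a b : 'I_n) (ws : seq 'S_n) : (b : nat) = (a : nat).+1 ->
  all (fun s => s \in Sgen n) ws -> tperm a b \notin ws ->
  stab (\prod_(s <- ws) s) b.
Proof.
move=> Hab; elim: ws => [|s ws IH] /=; first by rewrite big_nil => _ _; apply: stab1.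
move=> /andP[Hs Hall]; rewrite in_cons negb_or => /andP[Hne Hnin].
rewrite big_cons; apply: stabM; last exact: IH.
by apply: (stab_other Hab Hs); rewrite eq_sym.
Qed.

Lemma supp_Sgen x s : supp x s -> s \in Sgen n.
Proof. by move=> [w [[[Hall _] _] Hin]]; exact: (allP Hall). Qed.

Lemma supp_stab (a b : 'I_n) x : (b : nat) = (a : nat).+1 ->
  supp x (tperm a b) -> ~ stab x b.
Proof.
move=> Hab [ws [[Hw Hs] Hin]]; rewrite len_inv in Hs.
elim: ws x Hw Hs Hin => [|s ws IH] x [Hall Hprod] Hs Hin; first by rewrite in_nil in Hin.
rewrite big_cons in Hprod; move: Hall => /= /andP[Hs0 Hall].
have [a' [b' [Hab' Es]]] := (SgenP s).1 Hs0; subst s.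
set y := \prod_(s <- ws) s in Hprod.
have Hyb := word_bound (conj Hall (erefl y)).
rewrite -Hprod /= in Hs.
have [Hlt Hyi] : (y a' < y b')%N /\ size ws = inv y.
  case: (ltngtP (y a') (y b')) => H.
  - by split=> //; have := L2a Hab' H; move: (inv _) Hs => k Hs; lia.
  - by have := L2b Hab' H; move: (inv _) Hs => k Hs; lia.
  - by move/val_inj/perm_inj: H => E; rewrite E in Hab'; lia.
have Exy : forall p, x p = y (tperm a' b' p) by move=> p; rewrite -Hprod permM.
case: (boolP ((b' : nat) == b)) => [/eqP Hb|Hb].
  have Eb : b' = b by apply: val_inj.
  have Ea : a' = a by apply: val_inj => /=; lia.
  subst a' b'; move=> Hst.
  have H1 := Hst a ltac:(lia); have H2 := stabC Hst (leqnn b).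
  rewrite !Exy tpermL tpermR in H1 H2; lia.
move: Hin; rewrite in_cons => /orP[/eqP E|Hin].
  by have := gen_inj Hab Hab' E; move/eqP: Hb; lia.
have IHy := IH y (conj Hall erefl) Hyi Hin.
move=> Hst; apply: IHy.
have -> : y = tperm a' b' * x by rewrite -Hprod mulgA tperm2 mul1g.
apply: stabM => //; apply: stab_gen => //; move/eqP: Hb; lia.
Qed.

Lemma stab_supp (a b : 'I_n) x : (b : nat) = (a : nat).+1 ->
  ~ stab x b -> supp x (tperm a b).
Proof.
move=> Hab Hns; have [ws [[Hall Hprod] Hs]] := word_exists x.
exists ws; split; first by split; [split | rewrite len_inv].
case: (boolP (tperm a b \in ws)) => // Hnin; exfalso; apply: Hns.
rewrite -Hprod; exact: (stab_prod Hab Hall Hnin).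
Qed.

Lemma gen_stab (J : {set 'S_n}) (a b : 'I_n) v : (b : nat) = (a : nat).+1 ->
  J \subset Sgen n -> tperm a b \notin J -> v \in <<J>> -> stab v b.
Proof.
move=> Hab HJ Hn /gen_prodgP[k [c Hc ->]].
apply: (big_ind (fun g : 'S_n => stab g b)); [exact: stab1 | move=> g1 g2 H1 H2; exact: (stabM H1 H2) |].
move=> i _; apply: (stab_other Hab (subsetP HJ _ (Hc i))).
by apply/eqP => E; rewrite -E (Hc i) in Hn.
Qed.

End Inv.

Local Open Scope group_scope.
Arguments stabV [n x m] _ p _.

Lemma tperm_comm n (a b c d : 'I_n) : (b : nat) = (a : nat).+1 ->
  (d : nat) = (c : nat).+1 -> (c : nat) <> b -> (d : nat) <> a ->
  (tperm a b * tperm c d = tperm c d * tperm a b)%g.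
Proof.
move=> Hab Hcd Hcb Hda.
case: (boolP ((c : nat) == a)) => [/eqP Eca|Nca].
  by rewrite (gen_eq Hcd Hab ltac:(lia)).
have ne : forall p q : 'I_n, (p : nat) <> q -> p != q.
  by move=> p q H; apply/eqP => E; apply: H; rewrite E.
have E : (tperm a b ^ tperm c d)%g = tperm a b.
  rewrite tpermJ !tpermD //; apply: ne; move/eqP: Nca; lia.
by rewrite conjgC E.
Qed.

Theorem corollary5p5 (n : nat) (w : 'S_n) (J : {set 'S_n}) (s : 'S_n) :
  bruhat_irreducible w -> almost_reducible w J s ->
  forall t : 'S_n, DL w t -> DR w t -> (s * t = t * s)%g.
Proof.
move=> [_ Hirr] [HJ [u [v [[[Ew Hv Hu Hmin] HBP] Hsupp HnDL HnDR]]]] t HtL HtR.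
have [Hsu HsJ] := (Hsupp s).2 erefl.
have [a [b [Hab Es]]] := (SgenP s).1 (subsetP HJ s HsJ); subst s.
have [c [d [Hcd Et]]] := (SgenP t).1 (proj1 HtL); subst t.
have Hw : forall p, w p = v (u p) by move=> p; rewrite Ew permM.
have Hwi : forall p, (w^-1)%g p = (u^-1)%g ((v^-1)%g p) by move=> p; rewrite Ew invMg permM.
have HUJ : forall a' b' : 'I_n, (b' : nat) = (a' : nat).+1 -> tperm a' b' \in J ->
    (b' : nat) <> b -> stab u b'.
  move=> a' b' H Hin Hne; apply: NNPP => Hns.
  have E := (Hsupp _).1 (conj (stab_supp H Hns) Hin).
  by apply: Hne; apply: gen_inj H Hab E.
have HUs : ~ stab u b := supp_stab Hab Hsu.
have Hcoset : forall g, g \in <<J>> -> (u * g)%g \in (w *: <<J>>)%g.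
  move=> g Hg; move: Hu; rewrite !mem_lcoset => Hu.
  by rewrite mulgA groupM.
have HUc : forall a' b' : 'I_n, (b' : nat) = (a' : nat).+1 -> tperm a' b' \in J ->
    ((u^-1)%g a' < (u^-1)%g b')%N.
  move=> a' b' H Hin.
  have Hle := Hmin _ (Hcoset _ (mem_gen Hin)); rewrite !len_inv in Hle.
  case: (ltngtP ((u^-1)%g a') ((u^-1)%g b')) => // H'.
    by have := L1b H H'; move: Hle; move: (inv _) => k; move: (inv _) => k2; lia.
  by move/val_inj/perm_inj: H' => E; rewrite E in H; lia.
have HVJ : forall a' b' : 'I_n, (b' : nat) = (a' : nat).+1 -> tperm a' b' \notin J ->
    stab v b'.
  by move=> a' b' H Hn; apply: (gen_stab H HJ Hn Hv).
have HBPv : (v b < v a)%N := (DL_iff v Hab).1 (HBP _ Hsu HsJ).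
have HnDR' : ~ ((w^-1)%g b < (w^-1)%g a)%N by move=> H; apply: HnDR; apply/(DR_iff w Hab).
case: (classic (stab (tperm a b * v)%g b)) => Hst.
  exfalso; apply: Hirr.
  exists (u * tperm a b)%g, (tperm a b * v)%g; split.
  - apply/eqP => E1.
    have Eu : u = tperm a b by rewrite -[u]mulg1 -(tperm2 a b) mulgA E1 mul1g.
    have Hw1 : w \in <<J>> by rewrite Ew Eu groupM // mem_gen.
    have H1 : (1 : 'S_n) \in w *: <<J>> by rewrite mem_lcoset mulg1 groupV.
    have := Hmin _ H1; rewrite !len_inv inv1 leqn0 => /eqP/inv0 Eu1.
    by apply: HUs; rewrite Eu1; apply: stab1.
  - apply/eqP => E2.
    have Ev : v = tperm a b by rewrite -[v]mul1g -(tperm2 a b) -mulgA E2 mulg1.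
    by apply: HnDR'; rewrite !Hwi Ev tpermV tpermL tpermR; exact: HUc a b Hab HsJ.
  - by rewrite Ew mulgA -(mulgA u) tperm2 mulg1.
  - move=> s' [H1 H2].
    have [a' [b' [Hab' Es']]] := (SgenP s').1 (supp_Sgen H1); subst s'.
    have Hn1 := supp_stab Hab' H1; have Hn2 := supp_stab Hab' H2.
    case: (boolP ((b' : nat) == b)) => [/eqP Eb|Eb].
      by apply: Hn2; rewrite Eb.
    have Hsb : stab (tperm a b) b' by apply: stab_gen => //; move/eqP: Eb; lia.
    case: (boolP (tperm a' b' \in J)) => HJ'.
      have Ebn : (b' : nat) <> b by move/eqP: Eb.
      by apply: Hn1; apply: stabM (HUJ a' b' Hab' HJ' Ebn) Hsb.
    by apply: Hn2; apply: stabM Hsb (HVJ a' b' Hab' HJ').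
have vne : forall p q : 'I_n, (p : nat) <> q -> p != q.
  by move=> p q H; apply/eqP => E; apply: H; rewrite E.
case: (boolP ((c : nat) == b)) => [/eqP Ecb|Ncb].
  have Ec : c = b by apply: val_inj.
  subst c.
  case: (boolP (tperm b d \in J)) => HtJ.
  - have HdL : (w d < w b)%N := (DL_iff w Hcd).1 HtL.
    have stU : stab u d := HUJ b d Hcd HtJ ltac:(lia).
    have Hub : (u b < a)%N.
      have H1 : (u b < d)%N := stU b ltac:(lia).
      have H2 : (u b : nat) <> b.
        move=> E; apply: HUs => p Hp.
        have Hp1 : (u p < d)%N := stU p ltac:(lia).
        have Hp2 : (u p : nat) <> b.
          move=> E'; have : u p = u b by apply: val_inj; rewrite /= E E'.
          by move/perm_inj => Epb; rewrite Epb in Hp; lia.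
        lia.
      have H3 : (u b : nat) <> a.
        move=> E; have Eub : u b = a by apply: val_inj.
        have := HUc a b Hab HsJ; rewrite -Eub permK.
        have := stabV stU b ltac:(lia); lia.
      lia.
    have Ha' : (a.-1 < n)%N by have := ltn_ord a; lia.
    have Hab2 : (a : nat) = (Ordinal Ha' : nat).+1 by rewrite /=; lia.
    have Hud : (d <= u d)%N := stabC stU (leqnn d).
    case: (boolP (tperm (Ordinal Ha') a \in J)) => HJ2.
      have stU2 := HUJ _ _ Hab2 HJ2 ltac:(lia).
      have := @stabC _ u a b stU2 ltac:(lia); lia.
    have stV2 := HVJ _ _ Hab2 HJ2.
    have H1 := stV2 _ Hub.
    have H2 := @stabC _ v a (u d) stV2 ltac:(lia).
    rewrite !Hw in HdL; lia.
  - have HdR : ((w^-1) d < (w^-1) b)%N := (DR_iff w Hcd).1 HtR.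
    have stV : stab v d := HVJ b d Hcd HtJ.
    have Hvb : ((v^-1) b < a)%N.
      have H1 : ((v^-1) b < d)%N := stabV stV b ltac:(lia).
      have H2 : ((v^-1) b : nat) <> b.
        move=> E; have E' : (v^-1) b = b := val_inj E.
        have Evb : v b = b by rewrite -{1}E' permKV.
        have := stV a ltac:(lia); rewrite Evb in HBPv; lia.
      have H3 : ((v^-1) b : nat) <> a.
        move=> E; have E' : (v^-1) b = a := val_inj E.
        have Eva : v a = b by rewrite -E' permKV.
        apply: Hst => p Hp; rewrite permM.
        case: (boolP ((p : nat) == a)) => [/eqP Epa|Npa].
          have -> : p = a := val_inj Epa.
          rewrite tpermL.
          have := stV b ltac:(lia).
          have : (v b : nat) <> b.
            move=> E2; have : v b = v a by apply: val_inj; rewrite /= E2 Eva.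
            by move/perm_inj => Eba; rewrite Eba in Hab; lia.
          lia.
        rewrite tpermD; first last.
          by apply: vne; lia.
          by apply: vne; move/eqP: Npa; lia.
        have := stV p ltac:(lia).
        have : (v p : nat) <> b.
          move=> E2; have : v p = v a by apply: val_inj; rewrite /= E2 Eva.
          by move/perm_inj => Epa; rewrite Epa eqxx in Npa.
        lia.
      lia.
    have Ha' : (a.-1 < n)%N by have := ltn_ord a; lia.
    have Hab2 : (a : nat) = (Ordinal Ha' : nat).+1 by rewrite /=; lia.
    case: (boolP (tperm (Ordinal Ha') a \in J)) => HJ2.
      have stU2 := HUJ _ _ Hab2 HJ2 ltac:(lia).
      have H1 := stabV stU2 _ Hvb.
      have H2 := @stabC _ (v^-1) d d (stabV stV) (leqnn d).
      have H3 := @stabC _ (u^-1) a ((v^-1) d) (stabV stU2) ltac:(lia).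
      rewrite !Hwi in HdR; lia.
    have stV2 := HVJ _ _ Hab2 HJ2.
    by have := stV2 _ Hvb; rewrite permKV; lia.

case: (boolP ((d : nat) == a)) => [/eqP Eda|Nda].
  have Ed : d = a by apply: val_inj.
  subst d.
  case: (boolP (tperm c a \in J)) => HtJ.
  - have HdL : (w a < w c)%N := (DL_iff w Hcd).1 HtL.
    have stU : stab u a := HUJ c a Hcd HtJ ltac:(lia).
    have Hua : (b < u a)%N.
      have H1 : (a <= u a)%N := stabC stU (leqnn a).
      have H2 : (u a : nat) <> a.
        move=> E; apply: HUs => p Hp.
        case: (boolP ((p : nat) == a)) => [/eqP Epa|Npa].
          have -> : p = a := val_inj Epa.
          lia.
        have := stU p ltac:(move/eqP: Npa; lia); lia.
      have H3 : (u a : nat) <> b.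
        move=> E; have Eua : u a = b by apply: val_inj.
        have := HUc a b Hab HsJ; rewrite -Eua permK.
        have := @stabC _ (u^-1) a a (stabV stU) (leqnn a); lia.
      lia.
    have Hd' : (b.+1 < n)%N by have := ltn_ord (u a); lia.
    have Hbd : (Ordinal Hd' : nat) = (b : nat).+1 by [].
    have Huc : (u c < a)%N := stU c ltac:(lia).
    case: (boolP (tperm b (Ordinal Hd') \in J)) => HJ2.
      have stU2 := HUJ _ _ Hbd HJ2 ltac:(rewrite /=; lia).
      have := stU2 a ltac:(rewrite /=; lia); rewrite /=; lia.
    have stV2 := HVJ _ _ Hbd HJ2.
    have H1 := stV2 (u c) ltac:(rewrite /=; lia).
    have H2 := @stabC _ v (Ordinal Hd') (u a) stV2 ltac:(rewrite /=; lia).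
    rewrite !Hw in HdL; move: H1 H2; rewrite /=; lia.
  - have HdR : ((w^-1) a < (w^-1) c)%N := (DR_iff w Hcd).1 HtR.
    have stV : stab v a := HVJ c a Hcd HtJ.
    have Hva : (b < (v^-1) a)%N.
      have H1 : (a <= (v^-1) a)%N := @stabC _ (v^-1) a a (stabV stV) (leqnn a).
      have H2 : ((v^-1) a : nat) <> a.
        move=> E; have E' : (v^-1) a = a := val_inj E.
        have Eva : v a = a by rewrite -{1}E' permKV.
        rewrite Eva in HBPv.
        by have := stabV stV _ HBPv; rewrite permK; lia.
      have H3 : ((v^-1) a : nat) <> b.
        move=> E; have E' : (v^-1) a = b := val_inj E.
        have Evb : v b = a by rewrite -E' permKV.
        apply: Hst => p Hp; rewrite permM.
        case: (boolP ((p : nat) == a)) => [/eqP Epa|Npa].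
          have -> : p = a := val_inj Epa.
          by rewrite tpermL Evb; lia.
        rewrite tpermD; first last.
          by apply: vne; lia.
          by apply: vne; move/eqP: Npa; lia.
        have := stV p ltac:(move/eqP: Npa; lia); lia.
      lia.
    have Hd' : (b.+1 < n)%N by have := ltn_ord ((v^-1) a); lia.
    have Hbd : (Ordinal Hd' : nat) = (b : nat).+1 by [].
    case: (boolP (tperm b (Ordinal Hd') \in J)) => HJ2.
      have stU2 := HUJ _ _ Hbd HJ2 ltac:(rewrite /=; lia).
      have H1 := @stabC _ (u^-1) (Ordinal Hd') ((v^-1) a) (stabV stU2) ltac:(rewrite /=; lia).
      have H2 := stabV stV c ltac:(lia).
      have H3 := stabV stU2 ((v^-1) c) ltac:(rewrite /=; lia).
      rewrite !Hwi in HdR; move: H1 H3; rewrite /=; lia.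
    have stV2 := HVJ _ _ Hbd HJ2.
    by have := stabV stV2 a ltac:(rewrite /=; lia); rewrite /=; lia.

by apply: tperm_comm => //; [move/eqP: Ncb | move/eqP: Nda].
Qed.
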